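(* Let $B\in\mathbb{Z}^{d\times d}$ be nonsingular, let $i_1,\dots,i_d$ be any permutation of $1,\dots,d$, and for $j=1,\dots,d$ let $C^{(j)}=(B_{i_1},\dots,B_{i_j})\in\mathbb{Z}^{d\times j}$. Then $$|\det B|=|\Pi(B)\cap\mathbb{Z}^d|=\prod_{j=1}^d \mathrm{frac}_{C^{(j)}}[B_{i_j}],$$ where $\mathrm{frac}_{C^{(j)}}[B_{i_j}]$ denotes the fractionality of the coordinate of $C^{(j)}$ corresponding to the column $B_{i_j}$ (its last column).
   Context: For $M\in\mathbb{Z}^{d\times j}$ with linearly independent columns, $\Pi(M)=\{Mx:x\in[0,1)^j\}$. For every $b\in\mathbb{Z}^d$ in the real span of the columns of $M$ there is a unique $x\in\mathbb{Q}^j$ with $Mx=b$. The fractionality of a coordinate $i$ of $M$ is the maximum, over all such $b$, of the denominator $z_i\ge1$ of $x_i$ written in lowest terms $x_i=y_i/z_i$ with $\gcd(y_i,z_i)=1$. *)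

(* Defs.v *)
From HB Require Import structures.
From mathcomp Require Import all_boot all_order all_algebra all_fingroup.
Set Implicit Arguments. Unset Strict Implicit. Unset Printing Implicit Defensive.
Import Order.TTheory GRing.Theory Num.Theory.
Local Open Scope ring_scope.

Definition inPi (R : realFieldType) (d j : nat) (M : 'M[int]_(d, j))
    (b : 'cV[int]_d) : Prop :=
  exists x : 'cV[R]_j,
    (forall k : 'I_j, 0 <= x k 0 /\ x k 0 < 1) /\
    map_mx (fun z : int => z%:~R) M *m x = map_mx (fun z : int => z%:~R) b.

Definition frac_denom (d j : nat) (M : 'M[int]_(d, j)) (i : 'I_j) (z : int)
    : Prop :=
  exists (b : 'cV[int]_d) (x : 'cV[rat]_j),
    map_mx (fun z : int => z%:~R) M *m x = map_mx (fun z : int => z%:~R) b /\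
    denq (x i 0) = z.

Definition is_fractionality (d j : nat) (M : 'M[int]_(d, j)) (i : 'I_j)
    (z : int) : Prop :=
  frac_denom M i z /\ (forall z', frac_denom M i z' -> z' <= z).

(* C^(j+1) = (B_{s 0}, ..., B_{s j}) for j : 'I_d (0-indexed). *)
Definition Cmat (d : nat) (B : 'M[int]_d) (s : 'S_d) (j : 'I_d)
    : 'M[int]_(d, j.+1) :=
  \matrix_(r < d, c < j.+1) B r (s (widen_ord (ltn_ord j) c)).

(* Main.v *)
Require Import Defs.
From HB Require Import structures.
From mathcomp Require Import all_boot all_order all_algebra all_fingroup zify.
Import Order.TTheory GRing.Theory Num.Theory.
Local Open Scope ring_scope.
Set Implicit Arguments. Unset Strict Implicit. Unset Printing Implicit Defensive.

Definition toQ m n (A : 'M[int]_(m,n)) : 'M[rat]_(m,n) :=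
  map_mx (fun z : int => z%:~R) A.

Lemma toQM m n p (A : 'M[int]_(m,n)) (B : 'M[int]_(n,p)) :
  toQ (A *m B) = toQ A *m toQ B.
Proof. by rewrite /toQ map_mxM. Qed.

Lemma toQD m n (A B : 'M[int]_(m,n)) : toQ (A + B) = toQ A + toQ B.
Proof. by rewrite /toQ map_mxD. Qed.

Lemma toQB m n (A B : 'M[int]_(m,n)) : toQ (A - B) = toQ A - toQ B.
Proof. by rewrite /toQ map_mxB. Qed.

Lemma toQ1 n : toQ (1%:M : 'M[int]_n) = 1%:M.
Proof. by rewrite /toQ map_mx1. Qed.

Lemma toQ_inj m n : injective (@toQ m n).
Proof.
move=> A B /matrixP E; apply/matrixP=> i j; move: (E i j); rewrite !mxE.
by move/eqP; rewrite eqr_int => /eqP.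
Qed.

Lemma detQ n (A : 'M[int]_n) : \det (toQ A) = (\det A)%:~R.
Proof. by rewrite /toQ det_map_mx. Qed.

Lemma toQ_unit n (A : 'M[int]_n) : \det A != 0 -> toQ A \in unitmx.
Proof. by move=> h; rewrite unitmxE detQ unitfE intr_eq0. Qed.

Definition inPiQ d (B : 'M[int]_d) (b : 'cV[int]_d) : Prop :=
  forall k : 'I_d, 0 <= (invmx (toQ B) *m toQ b) k 0 /\ (invmx (toQ B) *m toQ b) k 0 < 1.

Lemma inPi_Q (R : realFieldType) d (B : 'M[int]_d) b :
  \det B != 0 -> inPi R B b <-> inPiQ B b.
Proof.
move=> dB; have uQ := toQ_unit dB.
set W := invmx (toQ B).
have toR m n (A : 'M[int]_(m,n)) : map_mx (fun z : int => z%:~R : R) A =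
    map_mx (fun q : rat => ratr q : R) (toQ A).
  by apply/matrixP=> i j; rewrite !mxE ratr_int.
set y := map_mx (fun q : rat => ratr q : R) (W *m toQ b).
have Ey : map_mx (fun z : int => z%:~R : R) B *m y = map_mx (fun z : int => z%:~R) b.
  by rewrite !toR /y -map_mxM mulmxA mulmxV // mul1mx.
have uR : map_mx (fun z : int => z%:~R : R) B \in unitmx.
  by rewrite toR unitmxE det_map_mx unitfE fmorph_eq0 -unitfE -unitmxE.
split.
- case=> x [hx Ex].
  have Exy : x = y by apply: (can_inj (mulKmx uR)); rewrite Ex Ey.
  rewrite {}Exy in hx.
  move=> k; have [h1 h2] := hx k; move: h1 h2; rewrite /y mxE.
  by rewrite ler0q -(rmorph1 (ratr : rat -> R)) ltr_rat.
- move=> h; exists y; split=> // k; rewrite /y mxE ler0q -(rmorph1 (ratr : rat -> R)) ltr_rat.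
  exact: h.
Qed.

Lemma card_lt m n : (n <= m)%N -> #|[pred k : 'I_m | (k < n)%N]| = n.
Proof.
move=> h; rewrite -sum1_card.
rewrite (eq_bigl (fun i : 'I_m => true && (i < n)%N)) //.
rewrite (big_ord_narrow_cond h) /=.
by rewrite sum1_card card_ord.
Qed.

Lemma unit_int_norm (x : int) : x \is a GRing.unit -> `|x| = 1.
Proof. by case/orP=> /eqP ->. Qed.

Lemma int_box (a b g z : int) :
  0 <= a < `|g| -> 0 <= b < `|g| -> a - b = g * z -> z = 0.
Proof. move=> /andP[h1 h2] /andP[h3 h4] e. nia. Qed.

Lemma addrKA' (a b : int) : a + b - a = b.
Proof. by rewrite addrC addKr. Qed.

Section Part1.
Variables (d : nat) (B : 'M[int]_d).
Hypothesis dB : \det B != 0.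

Let W := invmx (toQ B).
Let WB : W *m toQ B = 1%:M.
Proof. by rewrite /W mulVmx // toQ_unit. Qed.

Definition floorv (y : 'cV[rat]_d) : 'cV[int]_d := \col_i Num.floor (y i 0).
Definition rep (v : 'cV[int]_d) := v - B *m floorv (W *m toQ v).

Lemma frac_entry (y : 'cV[rat]_d) k :
  (y - toQ (floorv y)) k 0 = y k 0 - (Num.floor (y k 0))%:~R.
Proof. by rewrite !mxE. Qed.

Lemma W_rep (v : 'cV[int]_d) : W *m toQ (rep v) = W *m toQ v - toQ (floorv (W *m toQ v)).
Proof. by rewrite /rep toQB toQM mulmxBr mulmxA WB mul1mx. Qed.

Lemma rep_in (v : 'cV[int]_d) : inPiQ B (rep v).
Proof.
move=> k; rewrite W_rep frac_entry.
have /andP[h1 h2] := floor_itv ((W *m toQ v) k 0).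
split; first by rewrite subr_ge0.
by move: h2; rewrite intrD ltrBlDl addrC.
Qed.

Lemma rep_id (b : 'cV[int]_d) : inPiQ B b -> rep b = b.
Proof.
move=> h; rewrite /rep.
have -> : floorv (W *m toQ b) = 0.
  apply/matrixP=> i j; rewrite [LHS]mxE [RHS]mxE; have [h1 h2] := h i.
  by apply: floor_def; rewrite add0r h1 h2.
by rewrite mulmx0 subr0.
Qed.

Lemma repD (v k : 'cV[int]_d) : rep (v + B *m k) = rep v.
Proof.
rewrite /rep toQD toQM mulmxDr mulmxA WB mul1mx.
have -> : floorv (W *m toQ v + toQ k) = floorv (W *m toQ v) + k.
  by apply/matrixP=> i j; rewrite !mxE floorDrz ?intr_int // intrKfloor (ord1 j).
by rewrite mulmxDr opprD addrACA subrr addr0.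
Qed.

Lemma rep_eq (v1 v2 : 'cV[int]_d) : rep v1 = rep v2 -> exists k, v1 = v2 + B *m k.
Proof.
rewrite /rep => /eqP; rewrite subr_eq => /eqP ->.
exists (floorv (W *m toQ v1) - floorv (W *m toQ v2)).
by rewrite mulmxBr addrA addrAC.
Qed.


Lemma part1Q : exists S : seq 'cV[int]_d,
  uniq S /\ (forall b, b \in S <-> inPiQ B b) /\ `|\det B| = (size S)%:Z.
Proof.
have [L uL [Rm uR [g _ EB]]] := int_Smith_normal_form B.
set Dm := \matrix_(i, j) _ in EB.
have Dmul (z : 'cV[int]_d) i : (Dm *m z) i 0 = g`_i * z i 0.
  rewrite mxE (bigD1 i) //= big1 => [|j nij].
    by rewrite mxE eqxx mulr1n addr0.
  rewrite mxE (_ : (i == j :> nat) = false) ?mulr0n ?mul0r //.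
  by apply/negbTE; rewrite eq_sym.
have detD : \det Dm = \prod_(i < d) g`_i.
  rewrite (_ : Dm = diag_mx (\row_i g`_i)).
    by rewrite det_diag; apply: eq_bigr => i _; rewrite mxE.
  by apply/matrixP=> i j; rewrite !mxE.
have detB : `|\det B| = \prod_(i < d) `|g`_i|.
  rewrite EB !det_mulmx !normrM detD normr_prod.
  rewrite unitmxE in uL; rewrite unitmxE in uR.
  by rewrite (unit_int_norm uL) (unit_int_norm uR) mul1r mulr1.
have gnz (i : 'I_d) : g`_i != 0.
  apply/negP => /eqP h; move/eqP: dB; apply.
  by rewrite EB !det_mulmx detD (bigD1 i) //= h mul0r mulr0 mul0r.
pose n (i : 'I_d) : nat := absz (g`_i).
pose M := \max_(i < d) n i.
have nM (i : 'I_d) : (n i <= M)%N by exact: (leq_bigmax i).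
pose F := fun i : 'I_d => [pred k : 'I_M.+1 | (k < n i)%N].
pose yv := fun f : {ffun 'I_d -> 'I_M.+1} => \col_i ((f i : nat)%:Z) : 'cV[int]_d.
exists [seq rep (L *m yv f) | f in family F].
split; [|split].
- rewrite /image_mem map_inj_in_uniq ?enum_uniq // => f1 f2.
  rewrite !mem_enum => /familyP h1 /familyP h2 /rep_eq [k].
  rewrite EB -!mulmxA -mulmxDr => /(can_inj (mulKmx uL)) E.
  apply/ffunP => i; apply: val_inj.
  have E2 : ((f1 i : nat)%:Z) = (f2 i : nat)%:Z + g`_i * (Rm *m k) i 0.
    rewrite -Dmul.
    have -> : ((f1 i : nat)%:Z) = yv f1 i 0 by rewrite mxE.
    have -> : ((f2 i : nat)%:Z) = yv f2 i 0 by rewrite mxE.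
    by rewrite E [LHS]mxE.
  have b1 : 0 <= (f1 i : nat)%:Z < `|g`_i| by rewrite -abszE ltz_nat; apply: h1.
  have b2 : 0 <= (f2 i : nat)%:Z < `|g`_i| by rewrite -abszE ltz_nat; apply: h2.
  have z0 := int_box b1 b2 (etrans (congr1 (fun x => x - (f2 i : nat)%:Z) E2) (addrKA' _ _)).
  by move: E2; rewrite z0 mulr0 addr0 => -[].
- move=> b; split.
    by case/imageP => f _ ->; exact: rep_in.
  move=> hb; have [u Eu0] : {u : 'cV[int]_d | u = invmx L *m b} by eexists.
  pose r (i : 'I_d) : int := modz (u i 0) g`_i.
  have mlt (i : 'I_d) : (absz (r i) < n i)%N.
    have hm := ltz_mod (u i 0) (gnz i); have h0 := modz_ge0 (u i 0) (gnz i).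
    by rewrite /n /r -ltz_nat !abszE ger0_norm.
  pose f := [ffun i => inord (absz (r i)) : 'I_M.+1].
  have fF : f \in family F.
    apply/familyP => i; rewrite /F inE ffunE inordK ?mlt //.
    by rewrite ltnS (leq_trans (ltnW (mlt i)) (nM i)).
  pose c := \col_i (divz (u i 0) g`_i).
  have Eu : u = yv f + Dm *m c.
    apply/matrixP=> i j; rewrite (ord1 j) [RHS]mxE Dmul /yv !mxE ffunE inordK; last first.
      by rewrite ltnS (leq_trans (ltnW (mlt i)) (nM i)).
    rewrite abszE ger0_norm /r ?modz_ge0 ?gnz //.
    by rewrite {1}(divz_eq (u i 0) g`_i) addrC mulrC.
  have Eb : b = L *m yv f + B *m (invmx Rm *m c).
    by rewrite EB -!mulmxA mulKVmx // -mulmxDr -Eu Eu0 mulKVmx.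
  by rewrite -(rep_id hb) Eb repD; apply: image_f.
- rewrite size_image card_family foldrE big_map big_enum /= detB.
  have cF (i : 'I_d) : #|(fun x : 'I_M.+1 => (x < n i)%N)| = n i.
    by apply: card_lt; apply: leqW; apply: nM.
  rewrite (eq_bigr _ (fun i _ => cF i)).
  rewrite (big_morph Posz PoszM (erefl (Posz 1%N))).
  by apply: eq_bigr => i _; rewrite /n abszE.
Qed.

End Part1.

Definition uptri n (T : 'M[int]_n) := forall i j : 'I_n, (j < i)%N -> T i j = 0.

Lemma tri_decomp n (A : 'M[int]_n) :
  exists U T, U \in unitmx /\ uptri T /\ A = U *m T.
Proof.
elim: n A => [|n IH] A.
  by exists 1%:M, A; split; [exact: unitmx1|split; [case|rewrite mul1mx]].
have [L uL [R1 uR1 [g _ Ec]]] := int_Smith_normal_form (@lsubmx _ (1 + n) 1 n A).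
set c := @lsubmx _ (1 + n) 1 n A in Ec.
set A' : 'M[int]_(1 + n) := invmx L *m A.
have dl0 : dlsubmx A' = 0.
  apply/matrixP => i j; rewrite (ord1 j) [LHS]mxE [LHS]mxE [RHS]mxE.
  have -> : A' (rshift 1 i) (lshift n 0) = (invmx L *m c) (rshift 1 i) 0.
    by rewrite /A' /c !mxE; apply: eq_bigr => k _; rewrite !mxE.
  rewrite Ec mulmxA mulKmx // mxE big_ord1 mxE /=.
  by rewrite mulr0n mul0r.
have [U' [T' [uU' [tT' EA']]]] := IH (drsubmx A').
exists (L *m block_mx 1%:M 0 0 U'), (block_mx (ulsubmx A') (ursubmx A') 0 T').
split; [|split].
- by rewrite unitmx_mul uL unitmxE (@det_ublock _ 1 n) det1 mul1r -unitmxE.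
- move=> i j; case: (@split_ordP 1 n i) => i' ->; case: (@split_ordP 1 n j) => j' ->.
  + by rewrite !ord1.
  + by rewrite !ord1.
  + by move=> _; rewrite (@block_mxEdl _ 1 n 1 n) mxE.
  + by rewrite (@block_mxEdr _ 1 n 1 n) => /tT'; apply.
- rewrite -mulmxA (@mulmx_block _ 1 n 1 n 1 n) !mul1mx !mul0mx !mulmx0 !addr0 add0r -EA' -dl0.
  by rewrite submxK /A' mulKVmx.
Qed.

Lemma den_bound (q : rat) (t m : int) : t != 0 -> t%:~R * q = m%:~R -> denq q <= `|t|.
Proof.
move=> tn E.
have E2 : t * numq q = m * denq q.
  apply/eqP; rewrite -(eqr_int rat) !intrM numqE mulrA E.
  by [].
have E3 : (`|denq q| %| `|numq q| * `|t|)%N.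
  by rewrite mulnC -abszM E2 abszM dvdn_mull.
rewrite Gauss_dvdr in E3; last by rewrite coprime_sym coprime_num_den.
have := dvdn_leq _ E3; rewrite absz_gt0 tn => /(_ isT).
by rewrite -lez_nat absz_denq abszE.
Qed.

Lemma frac_tri d (U T : 'M[int]_d) (j : 'I_d) :
  U \in unitmx -> uptri T -> (forall i, T i i != 0) ->
  is_fractionality (\matrix_(r < d, c < j.+1) (U *m T) r (widen_ord (ltn_ord j) c))
    ord_max `|T j j|.
Proof.
move=> uU tT dT.
set w := widen_ord (ltn_ord j).
have wmax : w ord_max = j by apply: val_inj.
set C := \matrix_(r, c) _.
pose Tc : 'M[int]_(d, j.+1) := \matrix_(r, c) T r (w c).
pose Tt : 'M[int]_(j.+1) := \matrix_(a, c) T (w a) (w c).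
have EC : C = U *m Tc.
  by apply/matrixP=> r c; rewrite !mxE; apply: eq_bigr => k _; rewrite !mxE.
have rowT (x : 'cV[rat]_j.+1) (a : 'I_j.+1) :
    (toQ Tc *m x) (w a) 0 = (toQ Tt *m x) a 0.
  by rewrite !mxE; apply: eq_bigr => k _; rewrite !mxE.
have rowj (x : 'cV[rat]_j.+1) : (toQ Tc *m x) j 0 = (T j j)%:~R * x ord_max 0.
  rewrite mxE (bigD1 ord_max) //= big1 ?addr0 => [|c cn].
    by rewrite !mxE wmax.
  rewrite !mxE tT ?mul0r //.
  have := ltn_ord c; rewrite ltnS leq_eqVlt => /orP[/eqP h|//].
  by case/eqP: cn; apply: val_inj.
have rowlow (x : 'cV[rat]_j.+1) (r : 'I_d) : (j < r)%N -> (toQ Tc *m x) r 0 = 0.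
  move=> jr; rewrite mxE big1 // => c _; rewrite !mxE tT ?mul0r //.
  by apply: leq_ltn_trans jr; rewrite /= -ltnS.
split.
- pose e : 'cV[int]_d := \col_r (if r == j then 1 else 0).
  pose e' : 'cV[rat]_j.+1 := \col_a (if a == ord_max then 1 else 0).
  have uTt : toQ Tt \in unitmx.
    apply: toQ_unit; rewrite -det_tr det_trig.
      apply/prodf_neq0 => a _; rewrite !mxE; exact: dT.
    apply/forallP => a; apply/forallP => c; apply/implyP => h.
    by rewrite !mxE tT.
  pose x := invmx (toQ Tt) *m e'.
  have Ex : toQ Tt *m x = e' by rewrite /x mulKVmx.
  exists (U *m e), x; split.
    change (toQ C *m x = toQ (U *m e)).
    rewrite EC !toQM -mulmxA; congr (_ *m _).
    apply/matrixP => r c; rewrite (ord1 c).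
    case: (ltnP j r) => h.
      rewrite rowlow // /toQ !mxE (_ : (r == j) = false) //.
      by apply/negbTE; rewrite neq_ltn h orbT.
    have ra : (r < j.+1)%N by [].
    have -> : r = w (Ordinal ra) by apply: val_inj.
    rewrite rowT Ex /toQ !mxE.
    have -> : (Ordinal ra == ord_max) = (w (Ordinal ra) == j) by [].
    by case: (_ == _).
  have h1 : (T j j)%:~R * x ord_max 0 = 1.
    by rewrite -rowj; have := rowT x ord_max; rewrite wmax => ->; rewrite Ex mxE eqxx.
  have tnz : (T j j)%:~R != 0 :> rat by rewrite intr_eq0.
  have -> : x ord_max 0 = (T j j)%:~R^-1.
    by apply: (mulfI tnz); rewrite h1 mulfV.
  by rewrite denqVz.
- move=> z [b [x [Ex <-]]].
  change (toQ C *m x = toQ b) in Ex.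
  have uUQ : toQ (invmx U) *m toQ U = 1%:M by rewrite -toQM mulVmx // toQ1.
  have E2 : toQ Tc *m x = toQ (invmx U *m b).
    by rewrite toQM -Ex EC toQM -mulmxA mulmxA uUQ mul1mx.
  apply: (den_bound (dT j)); rewrite -rowj E2 /toQ mxE.
  by [].
Qed.

Theorem mainTheorem4 (R : realFieldType) (d : nat) (B : 'M[int]_d) (s : 'S_d) :
  \det B != 0 ->
  (exists S : seq 'cV[int]_d,
      uniq S /\ (forall b, b \in S <-> inPi R B b) /\
      `|\det B| = (size S)%:Z) /\
  (exists f : 'I_d -> int,
      (forall j : 'I_d, is_fractionality (Cmat B s j) ord_max (f j)) /\
      `|\det B| = \prod_(j < d) f j).
Proof.
move=> dB; split.
  have [S [uS [mS sS]]] := part1Q dB.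
  exists S; split=> //; split=> // b.
  by rewrite mS; apply: iff_sym; apply: inPi_Q.
pose Bs : 'M[int]_d := \matrix_(r, c) B r (s c).
have [U [T [uU [tT EB]]]] := tri_decomp Bs.
have nBs : `|\det Bs| = `|\det B|.
  have -> : Bs = col_perm s B by apply/matrixP=> r c; rewrite !mxE.
  rewrite col_permE.
  by rewrite det_mulmx det_perm normrM normrX normrN1 expr1n mulr1.
have detT : \det T = \prod_(i < d) T i i.
  rewrite -det_tr det_trig; first by apply: eq_bigr => i _; rewrite mxE.
  apply/forallP => a; apply/forallP => c; apply/implyP => h.
  by rewrite mxE tT.
have nT : `|\det Bs| = \prod_(i < d) `|T i i|.
  rewrite EB det_mulmx normrM detT normr_prod.
  by rewrite unitmxE in uU; rewrite (unit_int_norm uU) mul1r.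
have dT (i : 'I_d) : T i i != 0.
  apply/negP => /eqP h; move: dB; rewrite -normr_eq0 -nBs EB det_mulmx detT.
  by rewrite (bigD1 i) //= h mul0r mulr0 normr0 eqxx.
exists (fun j => `|T j j|); split; last by rewrite -nBs nT.
move=> j.
have -> : Cmat B s j = \matrix_(r < d, c < j.+1) (U *m T) r (widen_ord (ltn_ord j) c).
  by apply/matrixP => r c; rewrite /Cmat [LHS]mxE [RHS]mxE -EB mxE.
exact: frac_tri.
Qed.
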